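(* Let $n\ge5$ and let $\mathcal{W}=\mathcal{W}_1\cup\mathcal{W}_2\subset(\mathbb{R}^{4n})^{\otimes5}$ be the set defined below. Then the tensors in $\mathcal{W}$ are linearly independent. Moreover, if $\mathcal{T}_1\in\operatorname{Span}\mathcal{W}_1$ and $\mathcal{T}_2\in\operatorname{Span}\mathcal{W}_2$ satisfy $\mathcal{T}_1+\mathcal{T}_2=0$, then $\mathcal{T}_1=\mathcal{T}_2=0$.
   Context: All tensors are real. The set $\mathcal{W}$: for $i\in\{1,\dots,n\}$ let $\alpha_i\in\mathbb{R}^{2n}$ have entries $1$ at positions $2i-1,2i$ and $0$ elsewhere; $(a|b)\in\mathbb{R}^{4n}$ is concatenation. With $1\le i_1<i_2<i_3<i_4\le n$ and $1\le k_1<k_2\le n$ ranging over all choices, let $U$ be the set of vectors of the 16 types: $(\alpha_{i_1}+\alpha_{i_2}+\alpha_{i_3}+\alpha_{i_4}|0)$, $(\alpha_{i_1}+\alpha_{i_2}+\alpha_{i_3}|0)$, $(\alpha_{i_1}+\alpha_{i_2}|0)$, $(\alpha_{i_1}|0)$, $(\alpha_{i_1}+\alpha_{i_2}+\alpha_{i_3}+\alpha_{i_4}|\alpha_{k_1})$, $(\alpha_{i_1}+\alpha_{i_2}|\tfrac{(n-2)^2}{(n-3)(n-1)}\alpha_{k_1})$, $(\alpha_{i_1}|\tfrac{n-2}{n-3}\alpha_{k_1})$, $(\alpha_{i_1}|\tfrac{n-1}{n-4}\alpha_{k_1})$, $(\alpha_{i_1}+\alpha_{i_2}+\alpha_{i_3}|\alpha_{k_1}+\alpha_{k_2})$,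 $(\alpha_{i_1}+\alpha_{i_2}|\tfrac{n-2}{n-3}(\alpha_{k_1}+\alpha_{k_2}))$, $(\alpha_{i_1}+\alpha_{i_2}|\tfrac{n-2}{n-4}\alpha_{k_1})$, $(0|\alpha_{k_1})$, $(\alpha_{i_1}+\alpha_{i_2}+\alpha_{i_3}|\tfrac{n-3}{n-4}\alpha_{k_1})$, $(\alpha_{i_1}+\alpha_{i_2}+\alpha_{i_3}|\tfrac{n-2}{n-1}\alpha_{k_1})$, $(\alpha_{i_1}|\tfrac{n-1}{n-3}(\alpha_{k_1}+\alpha_{k_2}))$, $(0|\alpha_{k_1}+\alpha_{k_2})$ (types with only $i_1$ or only $k_1$ omit the other indices; $k_1$ alone ranges over $\{1,\dots,n\}$). Let $\pi(a_1,\dots,a_{2n},b_1,\dots,b_{2n})=(b_2,\dots,b_{2n},b_1,a_2,\dots,a_{2n},a_1)$. Set $\mathcal{W}_1=\{u^{\otimes5}:u\in U\}$, $\mathcal{W}_2=\{(\pi u)^{\otimes5}:u\in U\}$, $\mathcal{W}=\mathcal{W}_1\cup\mathcal{W}_2$; linear independence means the tensors $u^{\otimes5}$, $(\pi u)^{\otimes 5}$, $u\in U$, are linearly independent in $(\mathbb{R}^{4n})^{\otimes5}$. *)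

(* Defs.v *)
From HB Require Import structures.
From mathcomp Require Import all_boot all_order all_algebra.
Set Implicit Arguments. Unset Strict Implicit. Unset Printing Implicit Defensive.
Import Order.TTheory GRing.Theory Num.Theory.
Local Open Scope ring_scope.

Section Defs.
Variable R : realFieldType.

(** Vectors of R^(2n) / R^(4n) are represented as functions on 1-based
    positions [nat -> R] (only positions 1..2n, resp. 1..4n, matter). *)
Definition vec := nat -> R.

Definition vzero : vec := fun _ => 0.
Definition vscale (c : R) (a : vec) : vec := fun p => c * a p.

Definition alpha (i : nat) : vec :=
  fun p => if (p == (2 * i).-1)%N || (p == 2 * i)%N then 1 else 0.

(** sum of alpha_i over a set of indices, S : {set 'I_n}, index i <-> i+1 *)
Definition asum (n : nat) (S : {set 'I_n}) : vec :=
  fun p => \sum_(i in S) alpha (i.+1) p.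

Definition subsets (n m : nat) : seq {set 'I_n} :=
  enum [set S : {set 'I_n} | #|S| == m].

Definition cv (n : nat) (a b : vec) : vec :=
  fun p => if (p <= 2 * n)%N then a p else b (p - 2 * n)%N.

(** pi(a_1..a_2n, b_1..b_2n) = (b_2,...,b_2n,b_1,a_2,...,a_2n,a_1) *)
Definition piv (n : nat) (v : vec) : vec :=
  fun p => if (p <= 2 * n)%N then
             (if (p < 2 * n)%N then v (2 * n + p + 1)%N else v (2 * n + 1)%N)
           else let q := (p - 2 * n)%N in
             (if (q < 2 * n)%N then v (q + 1)%N else v 1%N).

Definition nR (k : nat) : R := k%:R.

(** The set U (as a list; duplicates are irrelevant, see lin_indep). *)
Definition U (n : nat) : seq vec :=
  let c6 := nR (n - 2) ^+ 2 / (nR (n - 3) * nR (n - 1)) in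
  let A := @asum n in
  let ks := iota 1 n in
  [seq cv n (A J) vzero | J <- subsets n 4] ++
  [seq cv n (A J) vzero | J <- subsets n 3] ++
  [seq cv n (A J) vzero | J <- subsets n 2] ++
  [seq cv n (A J) vzero | J <- subsets n 1] ++
  [seq cv n (A J) (alpha k) | J <- subsets n 4, k <- ks] ++
  [seq cv n (A J) (vscale c6 (alpha k)) | J <- subsets n 2, k <- ks] ++
  [seq cv n (A J) (vscale (nR (n - 2) / nR (n - 3)) (alpha k)) | J <- subsets n 1, k <- ks] ++
  [seq cv n (A J) (vscale (nR (n - 1) / nR (n - 4)) (alpha k)) | J <- subsets n 1, k <- ks] ++
  [seq cv n (A J) (A K) | J <- subsets n 3, K <- subsets n 2] ++
  [seq cv n (A J) (vscale (nR (n - 2) / nR (n - 3)) (A K)) | J <- subsets n 2, K <- subsets n 2] ++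
  [seq cv n (A J) (vscale (nR (n - 2) / nR (n - 4)) (alpha k)) | J <- subsets n 2, k <- ks] ++
  [seq cv n vzero (alpha k) | k <- ks] ++
  [seq cv n (A J) (vscale (nR (n - 3) / nR (n - 4)) (alpha k)) | J <- subsets n 3, k <- ks] ++
  [seq cv n (A J) (vscale (nR (n - 2) / nR (n - 1)) (alpha k)) | J <- subsets n 3, k <- ks] ++
  [seq cv n (A J) (vscale (nR (n - 1) / nR (n - 3)) (A K)) | J <- subsets n 1, K <- subsets n 2] ++
  [seq cv n vzero (A K) | K <- subsets n 2].

Definition tensor (n : nat) : lmodType R := {ffun {ffun 'I_5 -> 'I_(4 * n)} -> R^o}.

(** v^{(x)5}; index j : 'I_(4n) corresponds to 1-based position j+1 *)
Definition tpow5 (n : nat) (v : vec) : tensor n :=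
  [ffun f : {ffun 'I_5 -> 'I_(4 * n)} => \prod_(k < 5) v (f k).+1].

Definition W1 (n : nat) : seq (tensor n) := [seq tpow5 n u | u <- U n].
Definition W2 (n : nat) : seq (tensor n) := [seq tpow5 n (piv n u) | u <- U n].

End Defs.

(** Linear independence of the SET of elements of a list. *)
Definition lin_indep (R : realFieldType) (V : lmodType R) (S : seq V) : Prop :=
  forall c : V -> R, \sum_(v <- undup S) c v *: v = 0 ->
    forall v, v \in S -> c v = 0.

Definition in_span (R : realFieldType) (V : lmodType R) (S : seq V) (t : V) : Prop :=
  exists c : V -> R, t = \sum_(v <- undup S) c v *: v.

(* Main.v *)
Require Import Defs.
From HB Require Import structures.
From mathcomp Require Import all_boot all_order all_algebra.
From mathcomp Require Import zify ring lra.
Set Implicit Arguments. Unset Strict Implicit. Unset Printing Implicit Defensive.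
Import Order.TTheory GRing.Theory Num.Theory.
Local Open Scope ring_scope.

Module D1.
Section Tri.
Variable R : realFieldType.
Variable n : nat.
Local Notation tens := (tensor R n).
Local Notation idx := {ffun 'I_5 -> 'I_(4 * n)}.

Definition phi (a b : R) (f1 f2 : idx) (t : tens) : R := a * t f1 + b * t f2.

Lemma phi_sum (S : seq tens) (c : tens -> R) a b f1 f2 :
  phi a b f1 f2 (\sum_(v <- S) c v *: v) = \sum_(v <- S) c v * phi a b f1 f2 v.
Proof.
rewrite /phi !sum_ffunE mulr_sumr mulr_sumr -big_split /=.
apply: eq_bigr => v _; rewrite !ffunE /=.
have sc : forall x y : R, x *: (y : R^o) = x * y by [].
rewrite !sc; ring.
Qed.

Lemma tri_indep (S : seq tens) (rk : tens -> nat) :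
  (forall t, t \in S -> exists a b f1 f2, phi a b f1 f2 t != 0 /\
     forall t', t' \in S -> t' != t -> (rk t' <= rk t)%N -> phi a b f1 f2 t' = 0) ->
  lin_indep S.
Proof.
move=> H c Hs.
set B := (\max_(v <- S) rk v).+1.
have rkB v : v \in S -> (rk v < B)%N.
  by move=> vS; rewrite ltnS; exact: (@leq_bigmax_seq _ S xpredT rk v vS).
suff K : forall k v, v \in S -> (B <= k + rk v)%N -> c v = 0.
  by move=> v vS; apply: (K B v vS); rewrite leq_addr.
elim=> [|k IH] v vS hk.
  by have := rkB v vS; move: hk; lia.
have [a [b [f1 [f2 [nz0 Hz]]]]] := H v vS.
have := congr1 (phi a b f1 f2) Hs.
have z0 : forall f, (0 : tens) f = 0 by move=> f; rewrite ffunE.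
rewrite phi_sum /phi !z0 !mulr0 addr0.
have vU : v \in undup S by rewrite mem_undup.
rewrite (bigD1_seq v vU (undup_uniq S)) /= big1_seq.
  by rewrite addr0 => /eqP; rewrite mulf_eq0 (negbTE nz0) orbF => /eqP.
move=> w /andP[wv]; rewrite mem_undup => wS.
have [le|lt] := leqP (rk w) (rk v).
  by have := Hz w wS wv le; rewrite /phi => ->; rewrite mulr0.
rewrite (IH w wS) ?mul0r //.
move: hk lt; clear; lia.
Qed.
End Tri.

End D1.
Import D1.

Module D2.
Section Main.
Variable R : realFieldType.
Variable n : nat.
Hypothesis hn : (5 <= n)%N.
Local Notation tens := (tensor R n).
Local Notation idx := {ffun 'I_5 -> 'I_(4 * n)}.

Record desc := Desc { md : bool; SA : {set 'I_n}; SB : {set 'I_n}; cA : R; cB : R }.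
Definition inS (S : {set 'I_n}) (x : nat) : bool := [exists i in S, val i == x].
Definition blk (m : bool) (r : nat) : nat :=
  if m then (if (r.+1 < 2 * n)%N then (r.+1)./2 else 0%N) else r./2.
Definition vD (d : desc) (j : nat) : R :=
  if (j < 2 * n)%N then (if inS (SA d) (blk (md d) j) then cA d else 0)
  else (if inS (SB d) (blk (md d) (j - 2 * n)) then cB d else 0).
Definition TD (d : desc) : tens := [ffun f : idx => \prod_(k < 5) vD d (f k)].

Lemma inS_val (S : {set 'I_n}) (i : 'I_n) : inS S i = (i \in S).
Proof.
apply/existsP/idP => [[i' /andP[Hi /eqP /val_inj <-]] //|Hi].
by exists i; rewrite Hi eqxx.
Qed.

Lemma inS_sub (S S' : {set 'I_n}) x : S \subset S' -> inS S x -> inS S' x.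
Proof.
move=> /subsetP sub /existsP[i /andP[Hi Hx]]; apply/existsP; exists i.
by rewrite (sub _ Hi) Hx.
Qed.

Lemma inS_lt (S : {set 'I_n}) x : inS S x -> (x < n)%N.
Proof. by case/existsP=> i /andP[_ /eqP <-]; exact: ltn_ord. Qed.

Lemma half2 i : ((2 * i)./2 = i)%N.
Proof. by rewrite mulnC muln2 doubleK. Qed.

Lemma half2S i : ((2 * i).+1./2 = i)%N.
Proof. rewrite mulnC muln2; exact: (half_bit_double i true). Qed.

Lemma blk_even m j : ~~ odd j -> (j < 2 * n)%N -> blk m j = j./2.
Proof.
move=> ev lt; rewrite /blk; case: m => //.
have -> : (j.+1 < 2 * n)%N.
  rewrite ltn_neqAle lt andbT; apply/eqP => E.
  by move: (congr1 odd E) => /=; rewrite ev oddM.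
by rewrite -uphalfE uphalf_half (negbTE ev).
Qed.

Lemma h4n : (0 < 4 * n)%N.
Proof. by move: hn; lia. Qed.
Definition j0 : 'I_(4 * n) := Ordinal h4n.

Definition ent (L : seq nat) : idx := [ffun k : 'I_5 => insubd j0 (nth 0%N L k)].

Lemma TD_ent d L : size L = 5%N -> all (fun x => x < 4 * n)%N L ->
  TD d (ent L) = \prod_(x <- L) vD d x.
Proof.
move=> HL Hall; rewrite ffunE (big_nth 0%N) HL big_mkord.
apply: eq_bigr => k _; rewrite ffunE insubdK //.
by apply: (allP Hall); apply: mem_nth; rewrite HL.
Qed.

End Main.

End D2.
Import D2.

Module D3.
Section M3.
Variable R : realFieldType.
Variable n : nat.
Hypothesis hn : (5 <= n)%N.
Local Notation tens := (tensor R n).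
Local Notation desc := (desc R n).
Local Notation vD := (@vD R n).
Local Notation TD := (@TD R n).
Local Notation blk := (@blk n).

Definition ancA (S : {set 'I_n}) : seq nat := [seq (2 * val i)%N | i <- enum S].
Definition ancB (S : {set 'I_n}) : seq nat := [seq (2 * n + 2 * val i)%N | i <- enum S].

Lemma size_ancA S : size (ancA S) = #|S|.
Proof. by rewrite size_map -cardE. Qed.
Lemma size_ancB S : size (ancB S) = #|S|.
Proof. by rewrite size_map -cardE. Qed.

Lemma ancA_lt S : all (fun x => x < 4 * n)%N (ancA S).
Proof. by apply/allP => x /mapP[i _ ->] /=; have := ltn_ord i; lia. Qed.
Lemma ancB_lt S : all (fun x => x < 4 * n)%N (ancB S).
Proof. by apply/allP => x /mapP[i _ ->] /=; have := ltn_ord i; lia. Qed.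

Lemma prod_if (S S' : {set 'I_n}) (c : R) :
  \prod_(i in S) (if i \in S' then c else 0) = if S \subset S' then c ^+ #|S| else 0.
Proof.
case: ifP => [/subsetP sub|/subsetPn [i iS iS']].
  by rewrite -prodr_const; apply: eq_bigr => i /sub ->.
by rewrite (bigD1 i) //= (negbTE iS') mul0r.
Qed.

Lemma prod_ancA (d : desc) S : \prod_(x <- ancA S) vD d x =
  \prod_(i in S) (if i \in SA d then cA d else 0).
Proof.
rewrite big_map big_enum /=; apply: eq_bigr => i _.
rewrite /D2.vD (_ : (2 * i < 2 * n)%N); last by have := ltn_ord i; lia.
rewrite blk_even ?half2 ?inS_val //; first by rewrite oddM.
by have := ltn_ord i; lia.
Qed.

Lemma prod_ancB (d : desc) S : \prod_(x <- ancB S) vD d x =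
  \prod_(i in S) (if i \in SB d then cB d else 0).
Proof.
rewrite big_map big_enum /=; apply: eq_bigr => i _.
rewrite /D2.vD (_ : (2 * n + 2 * i < 2 * n)%N = false); last by have := ltn_ord i; lia.
rewrite addKn blk_even ?half2 ?inS_val //; first by rewrite oddM.
by have := ltn_ord i; lia.
Qed.

Lemma prod_nseq (T : Type) e (x : T) (F : T -> R) : \prod_(y <- nseq e x) F y = F x ^+ e.
Proof. by rewrite big_nseq; elim: e => //= e ->; rewrite exprS. Qed.

Lemma ent_val (d d' : desc) e k : (#|SA d| + #|SB d| + e = 5)%N -> (k < 4 * n)%N ->
  TD d' (ent hn (ancA (SA d) ++ ancB (SB d) ++ nseq e k)) =
  (if SA d \subset SA d' then cA d' ^+ #|SA d| else 0) *
  (if SB d \subset SB d' then cB d' ^+ #|SB d| else 0) * vD d' k ^+ e.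
Proof.
move=> hs hk; rewrite TD_ent.
- rewrite !big_cat /= prod_ancA prod_ancB !prod_if mulrA.
  by rewrite prod_nseq.
- by rewrite !size_cat size_ancA size_ancB size_nseq addnA.
rewrite !all_cat ancA_lt ancB_lt /=; apply/allP => x /nseqP[-> _] //.
Qed.


Definition kr (m : bool) (i : nat) : nat :=
  if m then (if i == 0%N then (2 * n).-1 else (2 * i).-1) else (2 * i).+1.
Definition nb (m : bool) (i : nat) : nat :=
  if m then (if i == 0%N then n.-1 else i.-1) else (if (i.+1 < n)%N then i.+1 else 0%N).
Definition kpos (m h : bool) (i : nat) : nat := ((if h then 0 else 2 * n) + kr m i)%N.

Lemma kr_lt m (i : 'I_n) : (kr m i < 2 * n)%N.
Proof. by have := ltn_ord i; rewrite /kr; case: m; [case: ifP => /eqP|]; lia. Qed.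

Lemma kpos_lt m h (i : 'I_n) : (kpos m h i < 4 * n)%N.
Proof. by have := kr_lt m i; rewrite /kpos; case: h; lia. Qed.

Lemma blk_kr m m' (i : 'I_n) : blk m' (kr m i) = if m' == m then val i else nb m i.
Proof.
have ltn := ltn_ord i.
case: m; case: m'; rewrite /kr /nb /D2.blk [_ == _]/=.
- case: eqP => H.
    by rewrite (_ : ((2 * n).-1.+1 < 2 * n)%N = false) ?H //; lia.
  rewrite (_ : ((2 * i).-1.+1 < 2 * n)%N = true); last lia.
  by rewrite (_ : (2 * i).-1.+1 = 2 * i)%N ?half2 //; lia.
- case: eqP => H.
    by rewrite (_ : (2 * n).-1 = (2 * n.-1).+1)%N ?half2S //; lia.
  by rewrite (_ : (2 * i).-1 = (2 * i.-1).+1)%N ?half2S //; lia.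
- rewrite (_ : ((2 * i).+2 < 2 * n)%N = (i.+1 < n)%N); last lia.
  by case: ifP => // _; rewrite (_ : (2 * i).+2 = 2 * i.+1)%N ?half2 //; lia.
- by rewrite half2S.
Qed.

Lemma vD_kpos (d : desc) m h (i : 'I_n) : vD d (kpos m h i) =
  if inS (if h then SA d else SB d) (blk (md d) (kr m i)) then (if h then cA d else cB d) else 0.
Proof.
have := kr_lt m i; rewrite /D2.vD /kpos; case: h => /= lt.
  by rewrite lt.
by rewrite (_ : (2 * n + kr m i < 2 * n)%N = false) ?addKn //; lia.
Qed.

Lemma inS_ord (S : {set 'I_n}) x : inS S x -> exists2 i : 'I_n, i \in S & val i = x.
Proof. by case/existsP => i /andP[iS /eqP <-]; exists i. Qed.

Lemma full_card (S : {set 'I_n}) : (forall k, (k < n)%N -> inS S k) -> #|S| = n.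
Proof.
move=> H; rewrite (_ : S = setT) ?cardsT ?card_ord //.
by apply/setP => i; rewrite inE -inS_val H.
Qed.

Lemma upL (S : {set 'I_n}) a : inS S a -> (forall x, inS S x -> (x.+1 < n)%N -> inS S x.+1) ->
  forall k, (a <= k < n)%N -> inS S k.
Proof.
move=> Ha Hs k /andP[]; elim: k => [|k IH] le lt.
  by move: le; rewrite leqn0 => /eqP <-.
case: (leqP a k) => le'.
  by apply: Hs => //; apply: IH => //; lia.
by rewrite (_ : k.+1 = a) //; lia.
Qed.

Lemma downL (S : {set 'I_n}) a : inS S a -> (forall x, inS S x -> (0 < x)%N -> inS S x.-1) ->
  forall k, (k <= a)%N -> inS S k.
Proof.
move=> Ha Hs k le; have -> : k = (a - (a - k))%N by lia.
elim: (a - k)%N => [|j IH]; first by rewrite subn0.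
case: (ltnP j a) => lt.
  by rewrite (_ : (a - j.+1 = (a - j).-1)%N); [apply: Hs => //; lia | lia].
by rewrite (_ : (a - j.+1 = a - j)%N) //; lia.
Qed.

Lemma ex_kill m (S : {set 'I_n}) : S != set0 -> (#|S| < n)%N ->
  exists2 i : 'I_n, i \in S & ~~ inS S (nb m i).
Proof.
move=> /set0Pn [i0 i0S] ltS.
apply/exists_inP; apply: contraLR ltS; rewrite negb_exists_in => /forall_inP H.
have Hn x : inS S x -> inS S (nb m x).
  by case/inS_ord => i iS <-; move/negPn: (H i iS).
clear H; rewrite -leqNgt (full_card _) //.
have hi0 := ltn_ord i0.
have Si0 : inS S i0 by rewrite inS_val.
case: m Hn => Hn /=.
- have Hd x : inS S x -> (0 < x)%N -> inS S x.-1.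
    by move=> Sx lt; have := Hn x Sx; rewrite /nb; case: eqP => //; lia.
  have S0 : inS S 0 by apply: (downL Si0 Hd).
  have Sn : inS S n.-1 by have := Hn 0%N S0.
  by move=> k lt; apply: (downL Sn Hd); lia.
- have Hu x : inS S x -> (x.+1 < n)%N -> inS S x.+1.
    by move=> Sx lt; have := Hn x Sx; rewrite /nb lt.
  have Sn : inS S n.-1 by apply: (upL Si0 Hu); lia.
  have S0 : inS S 0 by have := Hn _ Sn; rewrite /nb (_ : (n.-1.+1 < n)%N = false) //; lia.
  by move=> k lt; apply: (upL S0 Hu); lia.
Qed.

Definition rk (t : tens) : nat :=
  #|[set j : 'I_(4 * n) | ~~ odd j && (t [ffun=> j] != 0)]|.
Definition Ep (A B : {set 'I_n}) : {set 'I_(4 * n)} :=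
  [set j : 'I_(4 * n) | ~~ odd j &&
     (if (j < 2 * n)%N then inS A (j./2) else inS B ((j - 2 * n)./2))].

Lemma rk_TD (d : desc) : cA d != 0 -> cB d != 0 -> rk (TD d) = #|Ep (SA d) (SB d)|.
Proof.
move=> nA nB; rewrite /rk /Ep; apply: eq_card => j; rewrite !inE.
case ev: (odd j) => //=.
rewrite ffunE (eq_bigr (fun _ => vD d j)); last by move=> k _; rewrite ffunE.
rewrite prodr_const card_ord expf_eq0 /= /D2.vD.
have ltj := ltn_ord j.
case: ifP => lt.
  by rewrite blk_even ?ev //; case: ifP => //; rewrite eqxx.
rewrite blk_even; first by case: ifP => //; rewrite eqxx.
  by rewrite oddB ?ev //; [rewrite oddM|lia].
lia.
Qed.

Lemma Ep_sub (A B A' B' : {set 'I_n}) : A \subset A' -> B \subset B' -> Ep A B \subset Ep A' B'.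
Proof.
move=> sA sB; apply/subsetP => j; rewrite !inE => /andP[-> /=].
by case: ifP => _; [apply: inS_sub sA | apply: inS_sub sB].
Qed.

Lemma Ep_eq (A B A' B' : {set 'I_n}) : A \subset A' -> B \subset B' -> (#|Ep A' B'| <= #|Ep A B|)%N ->
  A = A' /\ B = B'.
Proof.
move=> sA sB le.
have E : Ep A B = Ep A' B' by apply/eqP; rewrite eqEcard Ep_sub.
split; apply/eqP; rewrite eqEsubset ?sA ?sB /=; apply/subsetP => i iS.
- have lt : (2 * i < 4 * n)%N by have := ltn_ord i; lia.
  have : Ordinal lt \in Ep A' B'.
    by rewrite inE /= oddM /= (_ : (2 * i < 2 * n)%N) ?half2 ?inS_val //; have := ltn_ord i; lia.
  rewrite -E inE /= oddM /= (_ : (2 * i < 2 * n)%N) ?half2 ?inS_val //; have := ltn_ord i; lia.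
- have lt : (2 * n + 2 * i < 4 * n)%N by have := ltn_ord i; lia.
  have : Ordinal lt \in Ep A' B'.
    rewrite inE /= oddD !oddM /= (_ : (2 * n + 2 * i < 2 * n)%N = false) ?addKn ?half2 ?inS_val //.
    lia.
  rewrite -E inE /= oddD !oddM /= (_ : (2 * n + 2 * i < 2 * n)%N = false) ?addKn ?half2 ?inS_val //.
  lia.
Qed.

End M3.

End D3.
Import D3.

Module D4.
Section M4.
Variable R : realFieldType.
Variable n : nat.
Hypothesis hn : (5 <= n)%N.

Local Notation N k := (nR R k).
Definition c6 : R := N (n - 2) ^+ 2 / (N (n - 3) * N (n - 1)).
Definition r23 : R := N (n - 2) / N (n - 3).
Definition r14 : R := N (n - 1) / N (n - 4).
Definition r24 : R := N (n - 2) / N (n - 4).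
Definition r34 : R := N (n - 3) / N (n - 4).
Definition r21 : R := N (n - 2) / N (n - 1).
Definition r13 : R := N (n - 1) / N (n - 3).

Definition typ (a b : nat) (c p : R) : Prop :=
  (a, b, c, p) = (4%N, 0%N, 1, 0) \/ (a, b, c, p) = (3%N, 0%N, 1, 0) \/
  (a, b, c, p) = (2%N, 0%N, 1, 0) \/ (a, b, c, p) = (1%N, 0%N, 1, 0) \/
  (a, b, c, p) = (4%N, 1%N, 1, 0) \/ (a, b, c, p) = (2%N, 1%N, c6, r24) \/
  (a, b, c, p) = (1%N, 1%N, r23, r14) \/ (a, b, c, p) = (1%N, 1%N, r14, r23) \/
  (a, b, c, p) = (3%N, 2%N, 1, 0) \/ (a, b, c, p) = (2%N, 2%N, r23, 0) \/
  (a, b, c, p) = (2%N, 1%N, r24, c6) \/ (a, b, c, p) = (0%N, 1%N, 1, 0) \/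
  (a, b, c, p) = (3%N, 1%N, r34, r21) \/ (a, b, c, p) = (3%N, 1%N, r21, r34) \/
  (a, b, c, p) = (1%N, 2%N, r13, 0) \/ (a, b, c, p) = (0%N, 2%N, 1, 0).

Lemma Npos k : (k < n)%N -> 0 < N (n - k).
Proof. by move=> lt; rewrite /nR ltr0n; lia. Qed.

Ltac tdes H := repeat (destruct H as [H|H]); inversion H; subst; clear H.

Lemma TF3 a b c p c' p' : typ a b c p -> typ b a c' p' -> (a + b != 5)%N.
Proof. move=> H1 H2; tdes H1; tdes H2; by []. Qed.


Lemma TF2 a b c p c' p' : typ a b c p -> typ a b c' p' -> c' = c \/ c' = p.
Proof. move=> H1 H2; tdes H1; tdes H2; try (by left); by right. Qed.

Lemma N1 : 0 < N (n - 1). Proof. by apply: Npos; lia. Qed.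
Lemma N2 : 0 < N (n - 2). Proof. by apply: Npos; lia. Qed.
Lemma N3 : 0 < N (n - 3). Proof. by apply: Npos; lia. Qed.
Lemma N4 : 0 < N (n - 4). Proof. by rewrite /nR ltr0n; lia. Qed.

Lemma pos_all : [/\ 0 < c6, 0 < r23, 0 < r14, 0 < r24 & [/\ 0 < r34, 0 < r21 & 0 < r13]].
Proof.
have h1 := N1; have h2 := N2; have h3 := N3; have h4 := N4.
rewrite /c6 /r23 /r14 /r24 /r34 /r21 /r13.
by repeat split; rewrite ?divr_gt0 ?mulr_gt0 ?exprn_gt0.
Qed.

Lemma frac_lt (x y z w : R) : 0 < y -> 0 < w -> x * w < z * y -> x / y < z / w.
Proof.
move=> y0 w0 H; rewrite ltr_pdivrMr // mulrAC ltr_pdivlMr //.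
Qed.

Lemma natN k : N k = k%:R. Proof. by []. Qed.

Lemma lt_c6_r24 : c6 < r24.
Proof.
rewrite /c6 /r24; apply: frac_lt; first by rewrite mulr_gt0 ?N3 ?N1.
  exact: N4.
rewrite !natN -natrX -!natrM ltr_nat; nia.
Qed.

Lemma lt_r23_r14 : r23 < r14.
Proof.
rewrite /r23 /r14; apply: frac_lt; [exact: N3 | exact: N4|].
rewrite !natN -!natrM ltr_nat; nia.
Qed.

Lemma lt_r21_r34 : r21 < r34.
Proof.
rewrite /r21 /r34; apply: frac_lt; [exact: N1 | exact: N4|].
rewrite !natN -!natrM ltr_nat; nia.
Qed.

Lemma TF1 a b c p : typ a b c p ->
  [/\ 0 < c, 0 <= p, p != c, (0 < a + b <= 5)%N &
   [/\ (a <= 4)%N, (b <= 4)%N & ((a == 0%N) || (b == 0%N) || (a + b == 5)%N -> p = 0)]].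
Proof.
have [p1 p2 p3 p4 [p5 p6 p7]] := pos_all.
have q1 := lt_c6_r24; have q2 := lt_r23_r14; have q3 := lt_r21_r34.
move=> H; tdes H; (split; [ | | | | split]) => //;
  rewrite ?ltW ?ltr01 ?lexx //;
  rewrite ?neq_lt ?p1 ?p2 ?p3 ?p4 ?p5 ?p6 ?p7 ?q1 ?q2 ?q3 ?ltr01 ?orbT //.
Qed.
End M4.

End D4.
Import D4.

Module D5.
Section M5.
Variable R : realFieldType.
Variable n : nat.
Hypothesis hn : (5 <= n)%N.
Local Notation tens := (tensor R n).
Local Notation desc := (desc R n).
Local Notation vD := (@vD R n).
Local Notation TD := (@TD R n).
Local Notation kpos := (@kpos n).
Local Notation nb := (@nb n).
Local Notation typ := (@typ R n).

Definition sh (d : desc) (h : bool) := if h then SA d else SB d.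
Definition ch (d : desc) (h : bool) := if h then cA d else cB d.
Definition good (d : desc) : Prop :=
  ch d (~~ md d) = 1 /\ exists p, typ #|sh d (~~ md d)| #|sh d (md d)| (ch d (md d)) p.

Lemma good_pos d : good d -> 0 < cA d /\ 0 < cB d.
Proof.
case: d => [[] A B a b] [/= e [p /(TF1 hn) [c0 _]]]; rewrite /ch /= in e c0.
  by rewrite e ltr01.
by rewrite e ltr01.
Qed.

Lemma desc_eq (d d' : desc) : md d' = md d -> SA d' = SA d -> SB d' = SB d ->
  ch d' (~~ md d) = ch d (~~ md d) -> ch d' (md d) = ch d (md d) -> d' = d.
Proof.
case: d => m A B a b; case: d' => m' A' B' a' b' /= -> -> ->.
by case: m; rewrite /ch /= => -> ->.
Qed.

Lemma shE (d : desc) : (#|sh d (~~ md d)| + #|sh d (md d)| = #|SA d| + #|SB d|)%N.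
Proof. by rewrite /sh; case: (md d) => //=; rewrite addnC. Qed.

Definition E (d : desc) h e i := ent hn (ancA (SA d) ++ ancB (SB d) ++ nseq e (kpos (md d) h i)).

Lemma sets_eq (d d' : desc) : good d -> good d' -> (rk (TD d') <= rk (TD d))%N ->
  SA d \subset SA d' -> SB d \subset SB d' -> SA d = SA d' /\ SB d = SB d'.
Proof.
move=> /good_pos [a1 b1] /good_pos [a2 b2].
rewrite !(rk_TD hn) ?gt_eqF //.
by move=> le sA sB; exact: (Ep_eq hn sA sB le).
Qed.

Lemma entE (d d' : desc) h e (i : 'I_n) : (#|SA d| + #|SB d| + e = 5)%N ->
  TD d' (E d h e i) = if (SA d \subset SA d') && (SB d \subset SB d') then
     cA d' ^+ #|SA d| * cB d' ^+ #|SB d| * vD d' (kpos (md d) h i) ^+ e else 0.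
Proof.
move=> hs; rewrite /E (ent_val hn) //; last first.
  by apply: kpos_lt.
by case: (SA d \subset SA d'); case: (SB d \subset SB d') => /=; rewrite ?mulr0 ?mul0r.
Qed.

Lemma kval (d d' : desc) h (i : 'I_n) : sh d' h = sh d h -> i \in sh d h ->
  ~~ inS (sh d h) (nb (md d) i) ->
  vD d' (kpos (md d) h i) = if md d' == md d then ch d' h else 0.
Proof.
move=> E1 iS kill; rewrite (vD_kpos hn) (blk_kr hn).
move: E1 iS kill; rewrite /sh /ch.
by case: h => /= -> iS kill; case: eqP => _; rewrite ?inS_val ?iS ?(negbTE kill).
Qed.

End M5.

End D5.
Import D5.

Module D6.
Section M6.
Variable R : realFieldType.
Variable n : nat.
Hypothesis hn : (5 <= n)%N.
Local Notation tens := (tensor R n).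
Local Notation desc := (desc R n).
Local Notation vD := (@vD R n).
Local Notation TD := (@TD R n).
Local Notation kpos := (@kpos n).
Local Notation nb := (@nb n).
Local Notation typ := (@typ R n).
Local Notation good := (@good R n).

Lemma i0lt : (0 < n)%N. Proof. by move: hn; lia. Qed.
Definition i0 : 'I_n := Ordinal i0lt.

Lemma core (d : desc) : good d -> exists a b f1 f2, phi a b f1 f2 (TD d) != 0 /\
  forall d', good d' -> (rk (TD d') <= rk (TD d))%N -> d' <> d -> phi a b f1 f2 (TD d') = 0.
Proof.
move=> gd; have [pA pB] := good_pos hn gd.
case: (gd) => hc [p tp].
have [c0 p0 pc /andP[s1 s5] [ha hb hp]] := TF1 hn tp.
rewrite shE in s1 s5.
have hAB : (#|SA d| <= 4)%N /\ (#|SB d| <= 4)%N by move: ha hb; rewrite /sh; case: (md d).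
have X0 : cA d ^+ #|SA d| * cB d ^+ #|SB d| != 0.
  by rewrite mulf_neq0 // expf_neq0 // gt_eqF.
have Hc : forall d', good d' -> d' <> d -> SA d' = SA d -> SB d' = SB d ->
    md d' = md d -> ch d' (md d) = p /\ ch d' (~~ md d) = 1.
  move=> d' [hc' [p' tp']] ne eA eB em; rewrite em in hc' tp'.
  have es h : sh d' h = sh d h by rewrite /sh eA eB.
  rewrite !es in tp'; split => //.
  case: (TF2 tp tp') => // ec; case: ne; apply: desc_eq => //.
  by rewrite hc hc'.
have Hx : forall d', good d' -> md d' != md d -> SA d' = SA d -> SB d' = SB d ->
    (#|SA d| + #|SB d| != 5)%N.
  move=> d' [hc' [p' tp']] em eA eB.
  have es h : sh d' h = sh d h by rewrite /sh eA eB.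
  have em' : md d' = ~~ md d by move: em; case: (md d'); case: (md d).
  rewrite em' negbK !es in tp'.
  by rewrite -shE; apply: (TF3 tp tp').
have Hsub : forall d' h e (i : 'I_n), good d' -> (rk (TD d') <= rk (TD d))%N ->
    (#|SA d| + #|SB d| + e = 5)%N ->
    TD d' (E hn d h e i) = 0 \/ (SA d' = SA d /\ SB d' = SB d /\
      TD d' (E hn d h e i) = cA d' ^+ #|SA d| * cB d' ^+ #|SB d| * vD d' (kpos (md d) h i) ^+ e).
  move=> d' h e i gd' rkle hs; rewrite (entE hn) //.
  case: ifP => [/andP[sA sB]|_]; last by left.
  have [eA eB] := sets_eq hn gd gd' rkle sA sB.
  by right.
have ph1 (t : tens) f : phi 1 0 f f t = t f by rewrite /phi mul1r mul0r addr0.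
have [s5'|s5'] := eqVneq (#|SA d| + #|SB d|)%N 5%N.
  have hs : (#|SA d| + #|SB d| + 0 = 5)%N by rewrite addn0.
  exists 1, 0, (E hn d true 0 i0), (E hn d true 0 i0); rewrite ph1; split.
    by rewrite (entE hn) // !subxx expr0 mulr1.
  move=> d' gd' rkle ne; rewrite ph1.
  case: (Hsub d' true 0%N i0 gd' rkle hs) => [//|[eA [eB _]]].
  case: (eqVneq (md d') (md d)) => em.
    have [c' _] := Hc d' gd' ne eA eB em.
    have p00 : p = 0 by apply: hp; rewrite shE s5' !orbT.
    have [a' b'] := good_pos hn gd'; move: c'; rewrite p00 /ch.
    by case: (md d) => E0; [move: a' | move: b']; rewrite E0 ltxx.
  by move: (Hx d' gd' em eA eB); rewrite s5'.
set e := (5 - (#|SA d| + #|SB d|))%N.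
have hs : (#|SA d| + #|SB d| + e = 5)%N by rewrite /e; lia.
have e0 : (0 < e)%N by rewrite /e; move: s5 s5'; lia.
have kill h : sh d h != set0 -> exists2 i, i \in sh d h & ~~ inS (sh d h) (nb (md d) i).
  move=> ne; apply: (ex_kill hn) => //.
  by case: hAB; rewrite /sh; case: (h); lia.
have shd d' h : SA d = SA d' -> SB d = SB d' -> sh d' h = sh d h by rewrite /sh => -> ->.
have Cpos d' : good d' -> ch d' (md d) = p -> 0 < p.
  by move=> gd' <-; have [a' b'] := good_pos hn gd'; rewrite /ch; case: (md d).
have z0 : (0 : R) ^+ e = 0 by rewrite expr0n eqn0Ngt e0.
case: (boolP ((SA d != set0) && (SB d != set0))) => [/andP[nA nB]|hne].
  have [iC iCs iCk] : exists2 i, i \in sh d (~~ md d) & ~~ inS (sh d (~~ md d)) (nb (md d) i).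
    by apply: kill; rewrite /sh; case: (md d).
  have [iV iVs iVk] : exists2 i, i \in sh d (md d) & ~~ inS (sh d (md d)) (nb (md d) i).
    by apply: kill; rewrite /sh; case: (md d).
  exists (p ^+ e), (-1), (E hn d (~~ md d) e iC), (E hn d (md d) e iV); split.
    rewrite /phi !(entE hn) // !subxx /=.
    rewrite !(kval hn (d' := d)) // eqxx hc.
    set X := (cA d ^+ _ * _).
    have -> : p ^+ e * (X * 1 ^+ e) + -1 * (X * ch d (md d) ^+ e) =
              X * (p ^+ e - ch d (md d) ^+ e) by rewrite expr1n; ring.
    rewrite mulf_neq0 // subr_eq0 eqrXn2 // ?ltW //.
  move=> d' gd' rkle ne; rewrite /phi !(entE hn) //.
  case: ifP => [/andP[sA sB]|_]; last by rewrite !mulr0 addr0.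
  have [eA eB] := sets_eq hn gd gd' rkle sA sB.
  rewrite !(kval hn (d' := d')) ?shd //.
  case: eqP => em.
    have [-> ->] := Hc d' gd' ne (esym eA) (esym eB) em.
    by rewrite expr1n; ring.
  by rewrite z0 !mulr0 addr0.
have nh : sh d (SA d != set0) != set0.
  move: hne; rewrite /sh; case: ifP => //= /negbFE /eqP A0 _.
  by move: s1; rewrite A0 cards0 add0n card_gt0.
have [i iS ik] := kill _ nh.
have p00 : p = 0.
  apply: hp; move: hne; rewrite negb_and !negbK.
  by rewrite /sh; case/orP => /eqP ->; case: (md d) => /=; rewrite ?cards0 ?eqxx ?orbT.
exists 1, 0, (E hn d (SA d != set0) e i), (E hn d (SA d != set0) e i); rewrite ph1; split.
  rewrite (entE hn) // !subxx /= (kval hn (d' := d)) // eqxx.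
  rewrite mulf_neq0 // expf_neq0 // gt_eqF //.
  by rewrite /ch; case: (SA d != set0).
move=> d' gd' rkle ne; rewrite ph1 (entE hn) //.
case: ifP => [/andP[sA sB]|_] //.
have [eA eB] := sets_eq hn gd gd' rkle sA sB.
rewrite (kval hn (d' := d')) ?shd //.
case: eqP => em; last by rewrite z0 mulr0.
have [c' _] := Hc d' gd' ne (esym eA) (esym eB) em.
by have := Cpos d' gd' c'; rewrite p00 ltxx.
Qed.
End M6.

End D6.
Import D6.

Module D7.
Section M7.
Variable R : realFieldType.
Variable n : nat.
Hypothesis hn : (5 <= n)%N.
Local Notation vec := (vec R).
Local Notation desc := (desc R n).
Local Notation vD := (@vD R n).
Local Notation typ := (@typ R n).

Definition shp (S : {set 'I_n}) (c : R) (a : vec) :=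
  forall j, (j < 2 * n)%N -> a j.+1 = if inS S j./2 then c else 0.

Lemma alphaE k j : alpha R k j.+1 = if (j./2).+1 == k then 1 else 0.
Proof.
rewrite /alpha.
have Hj : j = (odd j + 2 * j./2)%N by rewrite mulnC muln2 odd_double_half.
set h := j./2 in Hj *; set b := odd j in Hj *.
clearbody h b.
congr (if _ then _ else _).
apply/idP/idP.
  case/orP => /eqP E; apply/eqP; move: E Hj; case: b => /=; lia.
move=> /eqP E; apply/orP; move: E Hj; case: b => /= E Hj; [right|left]; apply/eqP; lia.
Qed.

Lemma shp_alpha (i : 'I_n) : shp [set i] 1 (alpha R i.+1).
Proof.
move=> j _; rewrite alphaE eqSS.
congr (if _ then _ else _); apply/eqP/existsP => [E|[i' /andP[]]].
  by exists i; rewrite inE E !eqxx.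
by rewrite inE => /eqP -> /eqP.
Qed.

Lemma shp_asum (J : {set 'I_n}) : shp J 1 (@asum R n J).
Proof.
move=> j _; rewrite /asum.
case: ifP => [/existsP[i /andP[iJ /eqP E]]|H].
  rewrite (bigD1 i) //= alphaE E eqxx big1 ?addr0 // => i' /andP[_ ne].
  rewrite alphaE -E eqSS; case: eqP => // E'; move: ne; by rewrite (val_inj E') eqxx.
rewrite big1 // => i iJ; rewrite alphaE eqSS; case: eqP => // E.
by move: H; rewrite E inS_val iJ.
Qed.

Lemma shp_zero c : shp set0 c (vzero R).
Proof.
move=> j _; rewrite /vzero; case: ifP => // /existsP[i]; by rewrite inE.
Qed.

Lemma shp_scale S c a : shp S 1 a -> shp S c (vscale c a).
Proof. by move=> H j lt; rewrite /vscale H //; case: ifP; rewrite ?mulr1 ?mulr0. Qed.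

Lemma shp_one S a : shp S 1 a -> shp S 1 a. Proof. by []. Qed.

Lemma cvE J K c a b : shp J 1 a -> shp K c b ->
  forall j, (j < 4 * n)%N -> cv n a b j.+1 = vD (Desc false J K 1 c) j.
Proof.
move=> ha hb j lt; rewrite /cv /D2.vD /=.
case: ifP => lt2; first by rewrite ha.
rewrite subSn; last by move: lt2; lia.
by rewrite hb //; move: lt2 lt; lia.
Qed.

Lemma pivE J K c a b : shp J 1 a -> shp K c b ->
  forall j, (j < 4 * n)%N -> piv n (cv n a b) j.+1 = vD (Desc true K J c 1) j.
Proof.
move=> ha hb j lt; rewrite /piv /cv /D2.vD /D2.blk /=.
case: ifP => lt2.
  case: ifP => lt3.
    rewrite (_ : (2 * n + j.+1 + 1 <= 2 * n)%N = false); last lia.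
    rewrite (_ : (2 * n + j.+1 + 1 - 2 * n = j.+2)%N); last lia.
    by rewrite hb.
  rewrite (_ : (2 * n + 1 <= 2 * n)%N = false); last lia.
  rewrite (_ : (2 * n + 1 - 2 * n = 1)%N); last lia.
  by rewrite hb //; move: hn; lia.
rewrite subSn; last by move: lt2; lia.
case: ifP => lt3.
  rewrite (_ : ((j - 2 * n).+1 + 1 <= 2 * n)%N = true); last lia.
  by rewrite addn1 ha.
rewrite (_ : (0 < 2 * n)%N = true); last by move: hn; lia.
by rewrite ha //; move: hn; lia.
Qed.

End M7.

End D7.
Import D7.

Module D8.
Section M8.
Variable R : realFieldType.
Variable n : nat.
Hypothesis hn : (5 <= n)%N.
Local Notation vec := (vec R).
Local Notation desc := (desc R n).
Local Notation vD := (@vD R n).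
Local Notation typ := (@typ R n).
Local Notation shp := (@shp R n).

Lemma subsetsE a J : J \in subsets n a -> #|J| = a.
Proof. by rewrite /subsets mem_enum inE => /eqP. Qed.

Lemma iotaE k : k \in iota 1 n -> exists i : 'I_n, k = i.+1.
Proof.
rewrite mem_iota => /andP[k1 kn].
have lt : (k.-1 < n)%N by move: k1 kn; lia.
by exists (Ordinal lt) => /=; move: k1; lia.
Qed.

Fixpoint inl (T : Type) (x : T) (s : seq T) : Prop :=
  if s is y :: s' then x = y \/ inl x s' else False.

Lemma inl_cat (T : Type) (x : T) s1 s2 : inl x (s1 ++ s2) -> inl x s1 \/ inl x s2.
Proof. elim: s1 => [|y s IH] /=; [by right | case=> [->|/IH]]; tauto. Qed.

Lemma inl_map (T1 T2 : Type) (f : T1 -> T2) s y : inl y (map f s) -> exists x, inl x s /\ y = f x.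
Proof.
elim: s => [|x s IH] //= [->|/IH [z [zs ->]]]; first by exists x; split => //; left.
by exists z; split => //; right.
Qed.

Lemma inl_flatten (T : Type) (x : T) ss : inl x (flatten ss) -> exists s, inl s ss /\ inl x s.
Proof.
elim: ss => [|s ss IH] //= H.
case: (inl_cat H) => [{}H|/IH [s' [H1 H2]]]; first by exists s; split => //; left.
by exists s'; split => //; right.
Qed.

Lemma inl_allpairs (S T U : Type) (f : S -> T -> U) s t y :
  inl y [seq f a b | a <- s, b <- t] -> exists a b, [/\ inl a s, inl b t & y = f a b].
Proof.
move=> H; case: (inl_flatten H) => l [H1 H2].
case: (inl_map H1) => a [Ha El]; rewrite El in H2.
case: (inl_map H2) => b [Hb ->].
by exists a, b.
Qed.

Lemma inl_mem (T : eqType) (x : T) s : inl x s -> x \in s.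
Proof.
elim: s => [|y s IH] //= [->|/IH H]; first by rewrite inE eqxx.
by rewrite inE H orbT.
Qed.

Lemma mem_map_inl (T1 : Type) (T2 : eqType) (f : T1 -> T2) s y :
  y \in map f s -> exists x, inl x s /\ y = f x.
Proof.
elim: s => [|x s IH] //=; rewrite inE => /orP [/eqP ->|/IH [z [zs ->]]].
  by exists x; split => //; left.
by exists z; split => //; right.
Qed.

Lemma case1 (F : {set 'I_n} -> vec) a u : inl u [seq F J | J <- subsets n a] ->
  exists J : {set 'I_n}, #|J| = a /\ u = F J.
Proof. by move=> H; case: (inl_map H) => J [/inl_mem/subsetsE hJ ->]; exists J. Qed.

Lemma case2 (F : {set 'I_n} -> nat -> vec) a u :
  inl u [seq F J k | J <- subsets n a, k <- iota 1 n] ->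
  exists (J : {set 'I_n}) (i : 'I_n), #|J| = a /\ u = F J i.+1.
Proof.
move=> H; case: (inl_allpairs H) => J [k [/inl_mem/subsetsE hJ /inl_mem/iotaE [i ->] ->]].
by exists J, i.
Qed.

Lemma case3 (F : {set 'I_n} -> {set 'I_n} -> vec) a b u :
  inl u [seq F J K | J <- subsets n a, K <- subsets n b] ->
  exists J K : {set 'I_n}, [/\ #|J| = a, #|K| = b & u = F J K].
Proof.
move=> H; case: (inl_allpairs H) => J [K [/inl_mem/subsetsE hJ /inl_mem/subsetsE hK ->]].
by exists J, K.
Qed.

Lemma case4 (F : nat -> vec) u : inl u [seq F k | k <- iota 1 n] ->
  exists i : 'I_n, u = F i.+1.
Proof. by move=> H; case: (inl_map H) => k [/inl_mem/iotaE [i ->] ->]; exists i. Qed.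

Ltac pick := rewrite /typ; repeat (first [left; reflexivity | right]); reflexivity.

Lemma U_desc u : inl u (U R n) -> exists (J K : {set 'I_n}) (c p : R) (a b : vec),
  [/\ u = cv n a b, typ #|J| #|K| c p, shp J 1 a & shp K c b].
Proof.
rewrite /U => H; cbv zeta in H.
case: (inl_cat H) => {H} [/case1 [J [hJ ->]]|H].
  exists J, set0, 1, 0, (asum R J), (vzero R); split => //.
  - by rewrite hJ cards0; pick.
  - exact: (shp_asum R hn).
  - exact: shp_zero.
case: (inl_cat H) => {H} [/case1 [J [hJ ->]]|H].
  exists J, set0, 1, 0, (asum R J), (vzero R); split => //.
  - by rewrite hJ cards0; pick.
  - exact: (shp_asum R hn).
  - exact: shp_zero.
case: (inl_cat H) => {H} [/case1 [J [hJ ->]]|H].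
  exists J, set0, 1, 0, (asum R J), (vzero R); split => //.
  - by rewrite hJ cards0; pick.
  - exact: (shp_asum R hn).
  - exact: shp_zero.
case: (inl_cat H) => {H} [/case1 [J [hJ ->]]|H].
  exists J, set0, 1, 0, (asum R J), (vzero R); split => //.
  - by rewrite hJ cards0; pick.
  - exact: (shp_asum R hn).
  - exact: shp_zero.
case: (inl_cat H) => {H} [/case2 [J [i [hJ ->]]]|H].
  exists J, [set i], 1, 0, (asum R J), (alpha R i.+1); split => //.
  - by rewrite hJ cards1; pick.
  - exact: (shp_asum R hn).
  - exact: (shp_alpha R hn).
case: (inl_cat H) => {H} [/case2 [J [i [hJ ->]]]|H].
  exists J, [set i], (c6 R n), (r24 R n), (asum R J), (vscale (c6 R n) (alpha R i.+1)); split => //.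
  - by rewrite hJ cards1; pick.
  - exact: (shp_asum R hn).
  - by apply: shp_scale; apply: (shp_alpha R hn).
case: (inl_cat H) => {H} [/case2 [J [i [hJ ->]]]|H].
  exists J, [set i], (r23 R n), (r14 R n), (asum R J), (vscale (r23 R n) (alpha R i.+1)); split => //.
  - by rewrite hJ cards1; pick.
  - exact: (shp_asum R hn).
  - by apply: shp_scale; apply: (shp_alpha R hn).
case: (inl_cat H) => {H} [/case2 [J [i [hJ ->]]]|H].
  exists J, [set i], (r14 R n), (r23 R n), (asum R J), (vscale (r14 R n) (alpha R i.+1)); split => //.
  - by rewrite hJ cards1; pick.
  - exact: (shp_asum R hn).
  - by apply: shp_scale; apply: (shp_alpha R hn).
case: (inl_cat H) => {H} [/case3 [J [K [hJ hK ->]]]|H].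
  exists J, K, 1, 0, (asum R J), (asum R K); split => //.
  - by rewrite hJ hK; pick.
  - exact: (shp_asum R hn).
  - exact: (shp_asum R hn).
case: (inl_cat H) => {H} [/case3 [J [K [hJ hK ->]]]|H].
  exists J, K, (r23 R n), 0, (asum R J), (vscale (r23 R n) (asum R K)); split => //.
  - by rewrite hJ hK; pick.
  - exact: (shp_asum R hn).
  - by apply: shp_scale; apply: (shp_asum R hn).
case: (inl_cat H) => {H} [/case2 [J [i [hJ ->]]]|H].
  exists J, [set i], (r24 R n), (c6 R n), (asum R J), (vscale (r24 R n) (alpha R i.+1)); split => //.
  - by rewrite hJ cards1; pick.
  - exact: (shp_asum R hn).
  - by apply: shp_scale; apply: (shp_alpha R hn).
case: (inl_cat H) => {H} [/case4 [i ->]|H].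
  exists set0, [set i], 1, 0, (vzero R), (alpha R i.+1); split => //.
  - by rewrite cards0 cards1; pick.
  - exact: shp_zero.
  - exact: (shp_alpha R hn).
case: (inl_cat H) => {H} [/case2 [J [i [hJ ->]]]|H].
  exists J, [set i], (r34 R n), (r21 R n), (asum R J), (vscale (r34 R n) (alpha R i.+1)); split => //.
  - by rewrite hJ cards1; pick.
  - exact: (shp_asum R hn).
  - by apply: shp_scale; apply: (shp_alpha R hn).
case: (inl_cat H) => {H} [/case2 [J [i [hJ ->]]]|H].
  exists J, [set i], (r21 R n), (r34 R n), (asum R J), (vscale (r21 R n) (alpha R i.+1)); split => //.
  - by rewrite hJ cards1; pick.
  - exact: (shp_asum R hn).
  - by apply: shp_scale; apply: (shp_alpha R hn).
case: (inl_cat H) => {H} [/case3 [J [K [hJ hK ->]]]|H].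
  exists J, K, (r13 R n), 0, (asum R J), (vscale (r13 R n) (asum R K)); split => //.
  - by rewrite hJ hK; pick.
  - exact: (shp_asum R hn).
  - by apply: shp_scale; apply: (shp_asum R hn).
case: (case1 H) => K [hK ->].
exists set0, K, 1, 0, (vzero R), (asum R K); split => //.
- by rewrite cards0 hK; pick.
- exact: shp_zero.
- exact: (shp_asum R hn).
Qed.
End M8.

End D8.
Import D8.

Module D9.
Section M9.
Variable R : realFieldType.
Variable n : nat.
Hypothesis hn : (5 <= n)%N.
Local Notation tens := (tensor R n).
Local Notation desc := (desc R n).
Local Notation TD := (@TD R n).
Local Notation good := (@good R n).

Lemma W1_desc t : t \in W1 R n -> exists d : desc, [/\ good d, md d = false & t = TD d].
Proof.
rewrite /W1 => /mem_map_inl [u [uU ->]].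
have [J [K [c [p [a [b [-> tp ha hb]]]]]]] := U_desc hn uU.
exists (Desc false J K 1 c); split => //.
  by split => //; exists p.
apply/ffunP => f; rewrite !ffunE; apply: eq_bigr => k _.
by rewrite (cvE hn ha hb).
Qed.

Lemma W2_desc t : t \in W2 R n -> exists d : desc, [/\ good d, md d = true & t = TD d].
Proof.
rewrite /W2 => /mem_map_inl [u [uU ->]].
have [J [K [c [p [a [b [-> tp ha hb]]]]]]] := U_desc hn uU.
exists (Desc true K J c 1); split => //.
  by split => //; exists p.
apply/ffunP => f; rewrite !ffunE; apply: eq_bigr => k _.
by rewrite (pivE hn ha hb).
Qed.

Lemma W_desc t : t \in W1 R n ++ W2 R n -> exists d : desc, good d /\ t = TD d.
Proof.
rewrite mem_cat => /orP[/W1_desc [d [g _ ->]]|/W2_desc [d [g _ ->]]]; by exists d.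
Qed.

Lemma part1 : lin_indep (W1 R n ++ W2 R n).
Proof.
apply: (@tri_indep _ _ _ (@rk R n)) => t /W_desc [d [gd ->]].
have [a [b [f1 [f2 [nz H]]]]] := core hn gd.
exists a, b, f1, f2; split => // t' /W_desc [d' [gd' ->]] ne le.
apply: (H d' gd' le) => E; move: ne; by rewrite E eqxx.
Qed.

Lemma disj t : t \in W1 R n -> t \notin W2 R n.
Proof.
move=> /W1_desc [d [gd m1 ->]]; apply/negP => /W2_desc [d' [gd' m2 E]].
have [a [b [f1 [f2 [nz H]]]]] := core hn gd.
have ne : d' <> d by move=> ed; move: m1 m2; rewrite ed => ->.
have le : (rk (TD d') <= rk (TD d))%N by rewrite E.
by move: nz; rewrite E (H d' gd' le ne) eqxx.
Qed.

End M9.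


End D9.
Import D9.

Unset Implicit Arguments.

Theorem proposition5p8 (R : realFieldType) (n : nat) (hn : (5 <= n)%N) :
  lin_indep (W1 R n ++ W2 R n) /\
  (forall T1 T2 : tensor R n,
      in_span (W1 R n) T1 -> in_span (W2 R n) T2 -> T1 + T2 = 0 ->
      T1 = 0 /\ T2 = 0).
Proof.
have LI := @part1 R n hn; split => //.
move=> T1 T2 [c1 ->] [c2 ->] hsum.
pose c v := if v \in W1 R n then c1 v else c2 v.
have HE : \sum_(v <- undup (W1 R n ++ W2 R n)) c v *: v =
   \sum_(v <- undup (W1 R n)) c1 v *: v + \sum_(v <- undup (W2 R n)) c2 v *: v.
  rewrite undup_cat (_ : [seq x <- undup (W1 R n) | x \notin W2 R n] = undup (W1 R n)).
    rewrite big_cat /=; congr (_ + _); apply: eq_big_seq => v.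
      by rewrite mem_undup /c => ->.
    rewrite mem_undup /c => v2; case: ifP => // v1.
    by move: (disj hn v1); rewrite v2.
  apply/all_filterP/allP => v; rewrite mem_undup; exact: (disj hn).
have C0 := LI c (etrans HE hsum).
split; apply: big1_seq => v /andP[_]; rewrite mem_undup => vW.
  by move: (C0 v); rewrite mem_cat vW /c vW => ->; rewrite ?scale0r.
move: (C0 v); rewrite mem_cat vW orbT /c.
case: ifP => [v1|_ -> //]; last by rewrite scale0r.
by move: (disj hn v1); rewrite vW.
Qed.
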